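(* Fix $\omega>0$. For every $s\in\mathbb Z$, the reflection $(B,A)\mapsto(B,-A)$ maps each of the curves $\partial L_{s,+}$, $\partial L_{s,-}$ to itself if $s$ is even, and interchanges $\partial L_{s,+}$ and $\partial L_{s,-}$ if $s$ is odd. In particular, for every even $s$ the curves $\partial L_{s,\pm}$ are orthogonal to the $B$-axis at the growth point of $L_s$. The reflection $(B,A)\mapsto(-B,A)$ maps $\partial L_{s,\pm}$ onto $\partial L_{-s,\mp}$ for even $s$, and maps $\partial L_{s,\pm}$ onto $\partial L_{-s,\pm}$ for odd $s$.
   Context: For $(B,A)\in\mathbb R^2$ consider $\frac{d\varphi}{dt}=-\sin\varphi+B+A\cos\omega t$; with $\tau=\omega t$, $l=B/\omega$, $\mu=A/(2\omega)$ this gives the vector field $\dot\varphi=-\frac{\sin\varphi}{\omega}+l+2\mu\cos\tau$, $\dot\tau=1$ on the torus $\mathbb R^2/2\pi\mathbb Z^2$ with coordinates $(\varphi,\tau)$. The rotation number is $\rho(B,A;\omega)=\lim_{k\to+\infty}\varphi(2\pi k)/(2\pi k)$; for $s\in\mathbb Z$, $L_s=\{\rho=s\}\subset\mathbb R^2_{(B,A)}$ is the phase-lock area. The Poincaré map $h_{(B,A)}$ is the time-$2\pi$ flow map on the circle $\{\tau=0\}$. $\partial L_{s,\pm}$ denotes the set of points of $L_s$ at which $h_{(B,A)}$ fixes $\pm\frac\pi2\pmod{2\pi}$; it is known that $\partial L_s=\partial L_{s,+}\cup\partial L_{s,-}$ and each $\partial L_{s,\pm}$ is the graph of an analytic function $B=g_{s,\pm}(A)$.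 The growth point of $L_s$ is its intersection point with the $B$-axis $\{A=0\}$. *)

(* Defs.v *)
From Stdlib Require Import Reals ZArith Lra.
From Coquelicot Require Import Coquelicot.
Open Scope R_scope.

(* The vector field on the torus in the time tau = omega t:
   dphi/dtau = - sin phi / omega + l + 2 mu cos tau,
   with l = B / omega and mu = A / (2 omega). *)
Definition field (omega B A : R) (phi tau : R) : R :=
  - sin phi / omega + B / omega + 2 * (A / (2 * omega)) * cos tau.

(* A (global) solution phi : R -> R of the equation (lift to R of the
   phi-coordinate, parametrized by tau). *)
Definition is_solution (omega B A : R) (phi : R -> R) : Prop :=
  forall tau : R, is_derive phi tau (field omega B A (phi tau) tau).

Definition rotation_number_is (omega B A r : R) : Prop :=
  (exists phi, is_solution omega B A phi) /\
  forall phi, is_solution omega B A phi ->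
    is_lim_seq (fun k : nat => phi (2 * PI * INR k) / (2 * PI * INR k)) r.

Definition L (omega : R) (s : Z) (B A : R) : Prop :=
  rotation_number_is omega B A (IZR s).

(* Graph of the Poincare map (time-2pi flow map on {tau = 0}), on the lift. *)
Definition poincare (omega B A x y : R) : Prop :=
  exists phi, is_solution omega B A phi /\ phi 0 = x /\ phi (2 * PI) = y.

Definition fixes_mod (omega B A x : R) : Prop :=
  exists m : Z, poincare omega B A x (x + 2 * PI * IZR m).

Definition half_pi (plus : bool) : R := if plus then PI / 2 else - (PI / 2).

Definition bdry (omega : R) (s : Z) (plus : bool) (B A : R) : Prop :=
  L omega s B A /\ fixes_mod omega B A (half_pi plus).

(* Main.v *)
Require Import Defs.
From Stdlib Require Import Reals ZArith Lra Lia.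
From Coquelicot Require Import Coquelicot.
Open Scope R_scope.

Lemma deriv_cont f x l : is_derive f x l -> continuity_pt f x.
Proof.
  intro H. apply continuity_pt_filterlim. apply (ex_derive_continuous (V := R_NormedModule)). exists l; exact H.
Qed.

Lemma mvt_bound f df M (Hd : forall x, is_derive f x (df x))
  (HM : forall x, Rabs (df x) <= M) a b : Rabs (f b - f a) <= M * Rabs (b - a).
Proof.
  destruct (MVT_gen f a b df) as [c [_ Hc]].
  - intros; apply Hd.
  - intros; eapply deriv_cont; apply Hd.
  - rewrite Hc, Rabs_mult. apply Rmult_le_compat_r; [apply Rabs_pos| apply HM].
Qed.

Lemma mvt_decr f df (Hd : forall x, is_derive f x (df x))
  (Hn : forall x, df x <= 0) a b : a <= b -> f b <= f a.
Proof.
  intro Hab.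
  destruct (MVT_gen f a b df) as [c [_ Hc]].
  - intros; apply Hd.
  - intros; eapply deriv_cont; apply Hd.
  - specialize (Hn c). nra.
Qed.

Lemma sin_lip a b : Rabs (sin a - sin b) <= Rabs (a - b).
Proof.
  rewrite <- (Rmult_1_l (Rabs (a - b))).
  apply (mvt_bound sin cos 1).
  - intro x. auto_derive; auto; ring.
  - intro x. apply Rabs_le. apply COS_bound.
Qed.

Lemma field_diff omega B A x y t : 0 < omega ->
  Rabs (field omega B A x t - field omega B A y t) <= / omega * Rabs (x - y).
Proof.
  intro h. unfold field.
  replace (- sin x / omega + B / omega + 2 * (A / (2 * omega)) * cos t -
     (- sin y / omega + B / omega + 2 * (A / (2 * omega)) * cos t))
    with (/ omega * (sin y - sin x)) by (field; lra).
  rewrite Rabs_mult, Rabs_right by (left; apply Rinv_0_lt_compat; lra).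
  apply Rmult_le_compat_l; [left; apply Rinv_0_lt_compat; lra|].
  rewrite Rabs_minus_sym. apply sin_lip.
Qed.

Lemma uniq omega B A f1 f2 (h : 0 < omega) :
  is_solution omega B A f1 -> is_solution omega B A f2 ->
  forall t0, f1 t0 = f2 t0 -> forall t, f1 t = f2 t.
Proof.
  intros H1 H2 t0 Ht0 t.
  set (K := / omega).
  assert (HK : 0 < K) by (apply Rinv_0_lt_compat; lra).
  set (d := fun t => f1 t - f2 t).
  set (dd := fun t => field omega B A (f1 t) t - field omega B A (f2 t) t).
  assert (Hd : forall t, is_derive d t (dd t)).
  { intro s. unfold d, dd. apply (is_derive_minus f1 f2). apply H1. apply H2. }
  assert (Hb : forall t, Rabs (dd t) <= K * Rabs (d t)).
  { intro s. apply field_diff; auto. }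
  assert (Hkey : forall s, d s * dd s <= K * (d s * d s)).
  { intro s. specialize (Hb s).
    assert (d s * dd s <= Rabs (d s) * Rabs (dd s)).
    { rewrite <- Rabs_mult. apply Rle_abs. }
    assert (Rabs (d s) * Rabs (d s) = d s * d s).
    { rewrite <- Rabs_mult. apply Rabs_right. nra. }
    pose proof (Rabs_pos (d s)). nra. }
  assert (Hkey2 : forall s, - (d s * dd s) <= K * (d s * d s)).
  { intro s. specialize (Hb s).
    assert (- (d s * dd s) <= Rabs (d s) * Rabs (dd s)).
    { rewrite <- Rabs_mult. rewrite <- Rabs_Ropp. apply Rle_abs. }
    assert (Rabs (d s) * Rabs (d s) = d s * d s).
    { rewrite <- Rabs_mult. apply Rabs_right. nra. }
    pose proof (Rabs_pos (d s)). nra. }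
  assert (Hd0 : d t0 = 0) by (unfold d; lra).
  enough (d t = 0) by (unfold d in *; lra).
  destruct (Rle_dec t0 t) as [Hle|Hlt].
  - pose (e := fun s => d s ^ 2 * exp (-2 * K * s)).
    assert (E : e t <= e t0).
    { refine (mvt_decr e (fun s => 2 * d s * dd s * exp (-2*K*s) + d s ^ 2 * (-2 * K * exp (-2*K*s))) _ _ t0 t Hle); unfold e.
      - intro s. auto_derive.
        + exists (dd s); apply Hd.
        + change (fun x : R => d x) with d. rewrite (is_derive_unique d s (dd s) (Hd s)). ring.
      - intro s. pose proof (exp_pos (-2*K*s)). specialize (Hkey s). nra. }
    unfold e in E. rewrite Hd0 in E. pose proof (exp_pos (-2*K*t)).
    assert (d t ^ 2 * exp (-2 * K * t) <= 0) by lra.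
    assert (d t ^ 2 <= 0). { apply (Rmult_le_reg_r (exp (-2*K*t))); lra. }
    nra.
  - pose (e := fun s => - (d s ^ 2 * exp (2 * K * s))).
    assert (E : e t0 <= e t).
    { refine (mvt_decr e (fun s => - (2 * d s * dd s * exp (2*K*s) + d s ^ 2 * (2 * K * exp (2*K*s)))) _ _ t t0 ltac:(lra)); unfold e.
      - intro s. auto_derive.
        + exists (dd s); apply Hd.
        + change (fun x : R => d x) with d. rewrite (is_derive_unique d s (dd s) (Hd s)). ring.
      - intro s. pose proof (exp_pos (2*K*s)). specialize (Hkey2 s). nra. }
    unfold e in E. rewrite Hd0 in E. pose proof (exp_pos (2*K*t)).
    assert (d t ^ 2 * exp (2 * K * t) <= 0) by lra.
    assert (d t ^ 2 <= 0). { apply (Rmult_le_reg_r (exp (2*K*t))); lra. }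
    nra.
Qed.

Lemma sol_affine omega B A B' A' phi e e' c v :
  is_solution omega B A phi ->
  (forall t, e * e' * field omega B A (phi (e' * t + c)) (e' * t + c)
             = field omega B' A' (e * phi (e' * t + c) + v) t) ->
  is_solution omega B' A' (fun t => e * phi (e' * t + c) + v).
Proof.
  intros H Hf t. rewrite <- Hf. auto_derive.
  - exists (field omega B A (phi (e' * t + c)) (e' * t + c)). apply H.
  - change (fun x : R => phi x) with phi. rewrite (is_derive_unique phi _ _ (H (e' * t + c))). ring.
Qed.

Lemma sin_shift_Z y m : sin (y + 2 * PI * IZR m) = sin y.
Proof.
  destruct (Z_le_gt_dec 0 m) as [Hm|Hm].
  - rewrite <- (Z2Nat.id m) by lia. rewrite <- INR_IZR_INZ.
    replace (y + 2 * PI * INR (Z.to_nat m)) with (y + 2 * INR (Z.to_nat m) * PI) by ring.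
    apply sin_period.
  - replace m with (- Z.of_nat (Z.to_nat (- m)))%Z by lia.
    rewrite opp_IZR, <- INR_IZR_INZ.
    set (z := y + 2 * PI * - INR (Z.to_nat (- m))).
    replace y with (z + 2 * INR (Z.to_nat (- m)) * PI) by (unfold z; ring).
    symmetry; apply sin_period.
Qed.

Lemma cos_2PI_shift t : cos (t + 2 * PI) = cos t.
Proof. rewrite cos_plus, cos_2PI, sin_2PI. ring. Qed.

Lemma sin_refl b y : sin (2 * half_pi b - y) = sin y.
Proof.
  destruct b; unfold half_pi.
  - replace (2 * (PI / 2) - y) with (PI - y) by field. apply sin_PI_x.
  - replace (2 * - (PI / 2) - y) with (- (y + PI)) by field.
    rewrite sin_neg, neg_sin. ring.
Qed.

Section Inst.
Variables (omega B A : R) (h : 0 < omega).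

Lemma I_shiftA phi j : is_solution omega B A phi ->
  is_solution omega B (- A) (fun t => 1 * phi (1 * t + PI) + 2 * PI * IZR j).
Proof.
  intro H. apply sol_affine with (B := B) (A := A); auto.
  intro t. unfold field. replace (1 * t + PI) with (t + PI) by ring. rewrite !Rmult_1_l.
  rewrite sin_shift_Z, neg_cos. field; lra.
Qed.

Lemma I_negB phi j : is_solution omega B A phi ->
  is_solution omega (- B) A (fun t => -1 * phi (1 * t + PI) + 2 * PI * IZR j).
Proof.
  intro H. apply sol_affine with (B := B) (A := A); auto.
  intro t. unfold field. replace (1 * t + PI) with (t + PI) by ring.
  rewrite sin_shift_Z, neg_cos.
  replace (-1 * phi (t + PI)) with (- phi (t + PI)) by ring. rewrite sin_neg.
  field; lra.
Qed.

Lemma I_refl phi b : is_solution omega B A phi ->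
  is_solution omega B A (fun t => -1 * phi (-1 * t + 0) + 2 * half_pi b).
Proof.
  intro H. apply sol_affine with (B := B) (A := A); auto.
  intro t. unfold field.
  replace (-1 * phi (-1 * t + 0) + 2 * half_pi b) with (2 * half_pi b - phi (-1 * t + 0)) by ring.
  rewrite sin_refl. replace (-1 * t + 0) with (- t) by ring. rewrite cos_neg.
  field; lra.
Qed.

Lemma I_period phi m : is_solution omega B A phi ->
  is_solution omega B A (fun t => 1 * phi (1 * t + 2 * PI) + 2 * PI * IZR m).
Proof.
  intro H. apply sol_affine with (B := B) (A := A); auto.
  intro t. unfold field. replace (1 * t + 2 * PI) with (t + 2 * PI) by ring. rewrite !Rmult_1_l.
  rewrite sin_shift_Z, cos_2PI_shift.
  field; lra.
Qed.
End Inst.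

Lemma inv_lim : is_lim_seq (fun n => / INR n) 0.
Proof.
  assert (H := is_lim_seq_inv INR p_infty is_lim_seq_INR ltac:(discriminate)).
  exact H.
Qed.

Lemma lim_a_c a c : is_lim_seq (fun n => a + c * / INR n) a.
Proof.
  assert (H := is_lim_seq_plus' _ _ a (c * 0) (is_lim_seq_const a)
     (is_lim_seq_mult' _ _ c 0 (is_lim_seq_const c) inv_lim)).
  rewrite Rmult_0_r, Rplus_0_r in H. exact H.
Qed.

Lemma bound_incr omega B A phi (h : 0 < omega) : is_solution omega B A phi ->
  exists M, forall t, Rabs (phi (t + PI) - phi t) <= M /\ Rabs (phi (t - PI) - phi t) <= M.
Proof.
  intro H.
  set (C := (1 + Rabs B + Rabs A) / omega).
  assert (HC : forall x, Rabs (field omega B A (phi x) x) <= C).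
  { intro x. unfold field, C.
    replace (- sin (phi x) / omega + B / omega + 2 * (A / (2 * omega)) * cos x)
      with ((- sin (phi x) + B + A * cos x) / omega) by (field; lra).
    unfold Rdiv. rewrite Rabs_mult, (Rabs_right (/ omega)) by (left; apply Rinv_0_lt_compat; lra).
    apply Rmult_le_compat_r; [left; apply Rinv_0_lt_compat; lra|].
    eapply Rle_trans; [apply Rabs_triang|].
    eapply Rle_trans; [apply Rplus_le_compat_r, Rabs_triang|].
    rewrite Rabs_Ropp, Rabs_mult.
    assert (Rabs (sin (phi x)) <= 1) by (apply Rabs_le; apply SIN_bound).
    assert (Rabs (cos x) <= 1) by (apply Rabs_le; apply COS_bound).
    pose proof (Rabs_pos A). nra. }
  exists (C * PI). intro t. split.
  - eapply Rle_trans. apply (mvt_bound phi (fun x => field omega B A (phi x) x) C); auto.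
    replace (t + PI - t) with PI by ring. rewrite Rabs_right by (left; apply PI_RGT_0). lra.
  - eapply Rle_trans. apply (mvt_bound phi (fun x => field omega B A (phi x) x) C); auto.
    replace (t - PI - t) with (- PI) by ring. rewrite Rabs_Ropp, Rabs_right by (left; apply PI_RGT_0). lra.
Qed.

Lemma small_lim (D : nat -> R) M : (forall n, Rabs (D n) <= M) ->
  is_lim_seq (fun n => D n / (2 * PI * INR n)) 0.
Proof.
  intro HD. pose proof PI_RGT_0 as HPI.
  apply is_lim_seq_le_le with (u := fun n => 0 + (- M / (2 * PI)) * / INR n)
                              (w := fun n => 0 + (M / (2 * PI)) * / INR n).
  2, 3: apply lim_a_c.
  intro n. specialize (HD n). apply Rabs_le_between in HD.
  destruct n as [|n].
  - simpl. unfold Rdiv. rewrite !Rmult_0_r, Rinv_0. lra.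
  - assert (0 < INR (S n)) by (apply lt_0_INR; lia).
    set (a := / (2 * PI) * / INR (S n)).
    assert (Ha : 0 < a) by (apply Rmult_lt_0_compat; apply Rinv_0_lt_compat; lra).
    assert (E : forall x, x / (2 * PI * INR (S n)) = x * a).
    { intro x. unfold a. field. lra. }
    assert (E2 : forall x, 0 + x / (2 * PI) * / INR (S n) = x * a).
    { intro x. unfold a. field. lra. }
    rewrite E, !E2. split; nra.
Qed.

Lemma rot_transfer omega B A B' A' r e (h : 0 < omega) (he : e * e = 1) :
  (forall phi, is_solution omega B A phi ->
     is_solution omega B' A' (fun t => e * phi (1 * t + PI) + 2 * PI * IZR 0)) ->
  (forall psi, is_solution omega B' A' psi ->
     is_solution omega B A (fun t => e * psi (1 * t + PI) + 2 * PI * IZR 0)) ->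
  rotation_number_is omega B A r -> rotation_number_is omega B' A' (e * r).
Proof.
  intros H1 H2 [[phi0 Hphi0] Hlim]. split.
  - eexists. apply H1, Hphi0.
  - intros psi Hpsi.
    set (phi := fun t => e * psi (1 * t + PI) + 2 * PI * IZR 0).
    assert (Hphi : is_solution omega B A phi) by (apply H2; auto).
    assert (Hpp : forall t, psi t = e * phi (t - PI)).
    { intro t. unfold phi. replace (1 * (t - PI) + PI) with t by ring.
      replace (e * (e * psi t + 2 * PI * IZR 0)) with ((e * e) * psi t) by (simpl; ring).
      rewrite he; ring. }
    destruct (bound_incr _ _ _ _ h Hphi) as [M HM].
    apply is_lim_seq_ext with
      (u := fun k => e * (phi (2 * PI * INR k) / (2 * PI * INR k)
              + (phi (2 * PI * INR k - PI) - phi (2 * PI * INR k)) / (2 * PI * INR k))).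
    { intro k. rewrite Hpp. unfold Rdiv. ring. }
    assert (L := is_lim_seq_plus' _ _ r 0 (Hlim _ Hphi) (small_lim (fun k => phi (2 * PI * INR k - PI) - phi (2 * PI * INR k)) M (fun n => proj2 (HM (2 * PI * INR n))))).
    rewrite Rplus_0_r in L.
    exact (is_lim_seq_mult' _ _ e r (is_lim_seq_const e) L).
Qed.

Lemma core omega s b B A (h : 0 < omega) : bdry omega s b B A ->
  exists phi, is_solution omega B A phi /\ phi 0 = half_pi b /\
    phi PI = half_pi b + PI * IZR s /\
    (forall t, phi (t + 2 * PI) = phi t + 2 * PI * IZR s).
Proof.
  intros [HL [m [phi [Hphi [H0 H2]]]]].
  set (x0 := half_pi b) in *.
  assert (Hper : forall t, phi (t + 2 * PI) = phi t + 2 * PI * IZR m).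
  { intro t.
    assert (U := uniq omega B A _ phi h (I_period omega B A h phi (- m) Hphi) Hphi 0).
    simpl in U. rewrite opp_IZR in U.
    assert (V := U ltac:(replace (1 * 0 + 2 * PI) with (2 * PI) by ring; rewrite H2, H0; ring) t).
    replace (1 * t + 2 * PI) with (t + 2 * PI) in V by ring. lra. }
  assert (Hn : forall n, phi (2 * PI * INR n) = x0 + 2 * PI * IZR m * INR n).
  { induction n.
    - simpl. rewrite Rmult_0_r, Rmult_0_r, Rplus_0_r. exact H0.
    - rewrite S_INR. replace (2 * PI * (INR n + 1)) with (2 * PI * INR n + 2 * PI) by ring.
      rewrite Hper, IHn. ring. }
  assert (Hms : m = s).
  { destruct HL as [_ Hlim]. specialize (Hlim phi Hphi).
    assert (Hl2 : is_lim_seq (fun k => phi (2 * PI * INR k) / (2 * PI * INR k)) (IZR m)).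
    { apply is_lim_seq_incr_1.
      apply is_lim_seq_ext with (u := fun n => IZR m + x0 / (2 * PI) * / INR (S n)).
      2: { apply is_lim_seq_incr_1 with (u := fun n => IZR m + x0 / (2 * PI) * / INR n). apply lim_a_c. }
      intro n. rewrite Hn. assert (0 < INR (S n)) by (apply lt_0_INR; lia).
      pose proof PI_RGT_0. field. lra. }
    apply is_lim_seq_unique in Hlim. apply is_lim_seq_unique in Hl2.
    rewrite Hlim in Hl2. injection Hl2. intro E. apply eq_IZR. auto. }
  subst m.
  exists phi. split; [auto|]. split; [auto|]. split; [|auto].
  assert (U := uniq omega B A _ phi h (I_refl omega B A h phi b Hphi) Hphi 0).
  cbv beta in U.
  assert (V := U ltac:(replace (-1 * 0 + 0) with 0 by ring; rewrite H0; fold x0; ring) PI).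
  simpl in V. replace (-1 * PI + 0) with (- PI) in V by ring.
  specialize (Hper (- PI)). replace (- PI + 2 * PI) with PI in Hper by ring.
  fold x0 in V. lra.
Qed.

Lemma partA omega s b B A (h : 0 < omega) : bdry omega s b B A ->
  forall b' j, half_pi b + PI * IZR s + 2 * PI * IZR j = half_pi b' ->
  bdry omega s b' B (- A).
Proof.
  intros Hb b' j Hj. pose proof Hb as [HL _].
  destruct (core omega s b B A h Hb) as [phi [Hphi [H0 [Hpi Hper]]]].
  split.
  - unfold L. rewrite <- (Rmult_1_l (IZR s)).
    apply (rot_transfer omega B A); auto; try ring.
    + intros f Hf. apply I_shiftA; auto.
    + intros f Hf. rewrite <- (Ropp_involutive A). apply I_shiftA; auto.
  - exists s. exists (fun t => 1 * phi (1 * t + PI) + 2 * PI * IZR j).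
    split; [apply I_shiftA; auto|]. split.
    + replace (1 * 0 + PI) with PI by ring. rewrite Hpi. lra.
    + replace (1 * (2 * PI) + PI) with (PI + 2 * PI) by ring. rewrite Hper, Hpi. lra.
Qed.

Lemma partB omega s b B A (h : 0 < omega) : bdry omega s b B A ->
  forall b' j, - (half_pi b + PI * IZR s) + 2 * PI * IZR j = half_pi b' ->
  bdry omega (- s) b' (- B) A.
Proof.
  intros Hb b' j Hj. pose proof Hb as [HL _].
  destruct (core omega s b B A h Hb) as [phi [Hphi [H0 [Hpi Hper]]]].
  split.
  - unfold L. rewrite opp_IZR. replace (- IZR s) with (-1 * IZR s) by ring.
    apply (rot_transfer omega B A); auto; try ring.
    + intros f Hf. apply I_negB; auto.
    + intros f Hf. rewrite <- (Ropp_involutive B). apply I_negB; auto.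
  - exists (- s)%Z. exists (fun t => -1 * phi (1 * t + PI) + 2 * PI * IZR j).
    split; [apply I_negB; auto|]. split.
    + replace (1 * 0 + PI) with PI by ring. rewrite Hpi. lra.
    + replace (1 * (2 * PI) + PI) with (PI + 2 * PI) by ring. rewrite Hper, Hpi, opp_IZR. lra.
Qed.

Lemma evenA s b : Z.Even s -> exists j, half_pi b + PI * IZR s + 2 * PI * IZR j = half_pi b.
Proof. intros [k ->]. exists (- k)%Z. rewrite mult_IZR, opp_IZR. ring. Qed.

Lemma oddA s b : Z.Odd s -> exists j, half_pi b + PI * IZR s + 2 * PI * IZR j = half_pi (negb b).
Proof.
  intros [k ->]. rewrite plus_IZR, mult_IZR. destruct b; unfold half_pi; simpl.
  - exists (- k - 1)%Z. rewrite minus_IZR, opp_IZR. field.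
  - exists (- k)%Z. rewrite opp_IZR. field.
Qed.

Lemma evenB s b : Z.Even s -> exists j, - (half_pi b + PI * IZR s) + 2 * PI * IZR j = half_pi (negb b).
Proof.
  intros [k ->]. exists k. rewrite mult_IZR. destruct b; unfold half_pi; simpl; field.
Qed.

Lemma oddB s b : Z.Odd s -> exists j, - (half_pi b + PI * IZR s) + 2 * PI * IZR j = half_pi b.
Proof.
  intros [k ->]. rewrite plus_IZR, mult_IZR. destruct b; unfold half_pi; simpl.
  - exists (k + 1)%Z. rewrite plus_IZR. field.
  - exists k. field.
Qed.

Theorem theorem1p21 (omega : R) (homega : 0 < omega) (s : Z) :
  (Z.Even s -> forall (b : bool) (B A : R),
      bdry omega s b B A <-> bdry omega s b B (- A)) /\
  (Z.Odd s -> forall (b : bool) (B A : R),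
      bdry omega s b B A <-> bdry omega s (negb b) B (- A)) /\
  (Z.Even s -> forall (b : bool) (g : R -> R),
      (forall B A : R, bdry omega s b B A <-> B = g A) ->
      ex_derive g 0 -> is_derive g 0 0) /\
  (Z.Even s -> forall (b : bool) (B A : R),
      bdry omega s b B A <-> bdry omega (- s)%Z (negb b) (- B) A) /\
  (Z.Odd s -> forall (b : bool) (B A : R),
      bdry omega s b B A <-> bdry omega (- s)%Z b (- B) A).
Proof.
  assert (P1 : Z.Even s -> forall (b : bool) (B A : R),
      bdry omega s b B A <-> bdry omega s b B (- A)).
  { intros He b B A. destruct (evenA s b He) as [j Hj]. split; intro H.
    - apply (partA omega s b B A homega H b j Hj).
    - rewrite <- (Ropp_involutive A). apply (partA omega s b B (- A) homega H b j Hj). }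
  split; [exact P1|]. split.
  { intros Ho b B A. split; intro H.
    - destruct (oddA s b Ho) as [j Hj]. apply (partA omega s b B A homega H _ j Hj).
    - destruct (oddA s (negb b) Ho) as [j Hj]. rewrite Bool.negb_involutive in Hj.
      rewrite <- (Ropp_involutive A). apply (partA omega s _ B (- A) homega H _ j Hj). }
  split.
  { intros He b g Hg [l Hl].
    assert (Heven : forall x, g (- x) = g x).
    { intro x. symmetry. apply Hg. apply (proj1 (P1 He b (g x) x)). apply Hg. reflexivity. }
    assert (Hl2 : is_derive (fun x => g (- x)) 0 (- l)).
    { assert (K := is_derive_comp g (fun x => - x) 0 l (-1)).
      cbv beta in K. replace (- 0) with 0 in K by ring. specialize (K Hl). 
      replace (- l) with (scal (-1) l) by (unfold scal; simpl; unfold mult; simpl; ring).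
      apply K. auto_derive; auto; ring. }
    assert (Hl3 : is_derive g 0 (- l)).
    { apply is_derive_ext with (f := fun x => g (- x)); auto. }
    assert (D1 := is_derive_unique _ _ _ Hl). assert (D2 := is_derive_unique _ _ _ Hl3).
    assert (E : l = 0) by (simpl in *; lra). rewrite E in Hl. exact Hl. }
  split.
  { intros He b B A. split; intro H.
    - destruct (evenB s b He) as [j Hj]. apply (partB omega s b B A homega H _ j Hj).
    - assert (He' : Z.Even (- s)) by (destruct He as [k ->]; exists (- k)%Z; lia).
      destruct (evenB (- s) (negb b) He') as [j Hj]. rewrite Bool.negb_involutive in Hj.
      rewrite <- (Ropp_involutive B), <- (Z.opp_involutive s).
      apply (partB omega (- s) _ (- B) A homega H _ j Hj). }
  { intros Ho b B A. split; intro H.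
    - destruct (oddB s b Ho) as [j Hj]. apply (partB omega s b B A homega H _ j Hj).
    - assert (Ho' : Z.Odd (- s)) by (destruct Ho as [k ->]; exists (- k - 1)%Z; lia).
      destruct (oddB (- s) b Ho') as [j Hj].
      rewrite <- (Ropp_involutive B), <- (Z.opp_involutive s).
      apply (partB omega (- s) _ (- B) A homega H _ j Hj). }
Qed.
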